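(* Let $W$ satisfy the mixing assumptions in the context, and consider the iterates $\mathbf{x}^{(k)}=[x_1^{(k)};\dots;x_m^{(k)}]\in\mathbb{R}^{mn}$ of Algorithm DDS-F (described in the context), where all poll directions are unit vectors and the stepsizes satisfy $\alpha_i^{(k)}\le\alpha^{(k)}_{\max}$ for all $i,k$, for a positive sequence $\{\alpha^{(k)}_{\max}\}$. Let $\zeta:=\max(|\lambda_2(W)|,|\lambda_m(W)|)$, let $C_W\ge0$ be a constant with $\|\widehat W^j-A_m\|\le C_W\zeta^j$ for all $j\in\mathbb{N}$, and let $C_\zeta\ge0$ be a constant with $\sum_{j=0}^k\zeta^{k-j}\alpha^{(j)}_{\max}\le C_\zeta\alpha^{(k)}_{\max}$ for all $k\in\mathbb{N}$. Then for every $k\ge1$, $$\left\|\mathbf{x}^{(k)}-A_m\mathbf{x}^{(k)}\right\|\le\sqrt{m}\,C_W\left(\|\mathbf{x}^{(0)}\|\zeta^k+C_\zeta\alpha^{(k-1)}_{\max}\right).$$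
   Context: Setting: $m$ agents on an undirected connected graph $\mathcal{G}=(\{1,\dots,m\},\mathcal{E})$; $\mathcal{N}_i=\{j\neq i:(i,j)\in\mathcal{E}\}$. Mixing assumptions on $W=[w_{ij}]\in\mathbb{R}^{m\times m}$ with eigenvalues $\lambda_1(W)\ge\dots\ge\lambda_m(W)$: $W$ symmetric with nonnegative entries, $w_{ij}>0$ iff $i=j$ or $j\in\mathcal{N}_i$; $\lambda_1(W)=1$, $\lambda_2(W)<1$; $W\mathbf{1}=\mathbf{1}$; $-1<\lambda_m(W)\le0$. Notation: $\widehat W=W\otimes I_n$, $A_m=\frac1m(\mathbf{1}_m\mathbf{1}_m^\mathrm{T})\otimes I_n$. Algorithm DDS-F (local functions $f_i:\mathbb{R}^n\to\mathbb{R}$, forcing function $\rho:\mathbb{R}^+\to\mathbb{R}^+$, poll sets $D_i^{(k)}\subset\mathbb{R}^n$, stepsizes $\alpha_i^{(k)}>0$): start from $x_1^{(0)}=\dots=x_m^{(0)}$. At iteration $k$, each agent $i$ checks whether some $d\in D^{(k)}_i$ satisfies $f_i(x_i^{(k)}+\alpha_i^{(k)}d)\le f_i(x_i^{(k)})-\rho(\alpha_i^{(k)})$. If so, $x_i^{(k+1)}=\sum_{j\in\mathcal{N}_i\cup\{i\}}w_{ij}x_j^{(k)}+\alpha_i^{(k)}d$ (successful for $i$); otherwise $x_i^{(k+1)}=\sum_{j\in\mathcal{N}_i\cup\{i\}}w_{ij}x_j^{(k)}$ (unsuccessful for $i$). *)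

(* Defs.v *)
From HB Require Import structures.
From mathcomp Require Import all_boot all_order all_algebra.
From mathcomp Require Import classical_sets reals.
Set Implicit Arguments. Unset Strict Implicit. Unset Printing Implicit Defensive.
Import Order.TTheory GRing.Theory Num.Theory.
Local Open Scope ring_scope.
Local Open Scope classical_set_scope.

(* Decompose an index of 'I_(m*n) into a pair (block index, coordinate), the
   inverse of mxvec_index: block i of a vector in R^(mn) is x_i in R^n. *)
Definition split_idx (m n : nat) (k : 'I_(m * n)) : 'I_m * 'I_n :=
  enum_val (cast_ord (esym (mxvec_cast m n)) k).

Definition kron (R : pzRingType) (m1 n1 m2 n2 : nat)
  (A : 'M[R]_(m1, n1)) (B : 'M[R]_(m2, n2)) : 'M[R]_(m1 * m2, n1 * n2) :=
  \matrix_(i, j) (A (split_idx i).1 (split_idx j).1 * B (split_idx i).2 (split_idx j).2).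

Definition stack (R : Type) (m n : nat) (X : 'M[R]_(m, n)) : 'cV[R]_(m * n) :=
  \col_k X (split_idx k).1 (split_idx k).2.

Definition rnorm (R : realType) (n : nat) (v : 'rV[R]_n) : R :=
  Num.sqrt (\sum_j v 0 j ^+ 2).
Definition vnorm (R : realType) (N : nat) (v : 'cV[R]_N) : R :=
  Num.sqrt (\sum_i v i 0 ^+ 2).

Definition opnorm (R : realType) (N : nat) (M : 'M[R]_N) : R :=
  sup [set vnorm (M *m v) | v in [set v : 'cV[R]_N | vnorm v <= 1]].

Definition hatW (R : realType) (m n : nat) (W : 'M[R]_m) : 'M[R]_(m * n) :=
  kron W (1%:M : 'M[R]_n).
Definition Am (R : realType) (m n : nat) : 'M[R]_(m * n) :=
  kron ((m%:R)^-1 *: (const_mx 1 : 'M[R]_m)) (1%:M : 'M[R]_n).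

(* Mixing assumptions on W for the graph with (symmetric, irreflexive,
   connected) edge relation e on {1..m}; lam is the list of eigenvalues
   of W (with multiplicity) sorted nonincreasingly. *)
Definition graph_ok (m : nat) (e : rel 'I_m) : Prop :=
  symmetric e /\ irreflexive e /\ (forall i j, connect e i j).

Definition mixing (R : realType) (m : nat) (e : rel 'I_m) (W : 'M[R]_m)
  (lam : seq R) : Prop :=
  W^T = W /\
  (forall i j, 0 <= W i j) /\
  (forall i j, 0 < W i j <-> (i = j \/ e i j)) /\
  (size lam = m /\ sorted (>=%R) lam /\
     char_poly W = \prod_(l <- lam) ('X - l%:P)) /\
  lam`_0 = 1 /\ lam`_1 < 1 /\
  W *m (const_mx 1 : 'cV[R]_m) = const_mx 1 /\
  -1 < lam`_(m.-1) /\ lam`_(m.-1) <= 0.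

Definition ddsf_step (R : realType) (m n : nat) (e : rel 'I_m) (W : 'M[R]_m)
  (f : 'I_m -> 'rV[R]_n -> R) (rho : R -> R)
  (D : nat -> 'I_m -> 'rV[R]_n -> Prop) (alpha : nat -> 'I_m -> R)
  (x : nat -> 'I_m -> 'rV[R]_n) (k : nat) (i : 'I_m) : Prop :=
  let mix := \sum_(j | (j == i) || e i j) W i j *: x k j in
  (exists d, D k i d /\
     f i (x k i + alpha k i *: d) <= f i (x k i) - rho (alpha k i) /\
     x k.+1 i = mix + alpha k i *: d)
  \/
  ((forall d, D k i d ->
      ~ (f i (x k i + alpha k i *: d) <= f i (x k i) - rho (alpha k i))) /\
   x k.+1 i = mix).

Definition xstack (R : realType) (m n : nat) (x : nat -> 'I_m -> 'rV[R]_n)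
  (k : nat) : 'cV[R]_(m * n) :=
  stack (\matrix_(i, j) x k i 0 j).

(* Main.v *)
Require Import Defs.
Set Warnings "-notation-overridden,-ambiguous-paths".
From HB Require Import structures.
From mathcomp Require Import all_boot all_order all_algebra.
From mathcomp Require Import classical_sets reals.
From mathcomp Require Import ring lra.
Import Order.TTheory GRing.Theory Num.Theory.
Local Open Scope ring_scope.
Section Helpers.
Set Implicit Arguments.
Unset Strict Implicit.
Lemma split_idxK m n (i : 'I_m) (j : 'I_n) : split_idx (mxvec_index i j) = (i, j).
Proof. by rewrite /split_idx /mxvec_index cast_ordK enum_rankK. Qed.

Lemma sum_split (R : realType) m n (F : 'I_m -> 'I_n -> R) :
  \sum_(k < m * n) F (split_idx k).1 (split_idx k).2 = \sum_i \sum_j F i j.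
Proof.
rewrite (reindex _ (curry_mxvec_bij _ _)) /= pair_bigA.
by apply: eq_bigr => [[i j]] _ /=; rewrite split_idxK.
Qed.

Lemma kron_stack (R : realType) m n (A : 'M[R]_m) (X : 'M[R]_(m, n)) :
  kron A (1%:M : 'M[R]_n) *m stack X = stack (A *m X).
Proof.
apply/colP => k; rewrite !mxE.
under eq_bigr do rewrite !mxE.
etransitivity; first exact: (@sum_split R m n (fun i j => A (split_idx k).1 i * ((split_idx k).2 == j)%:R * X i j)).
apply: eq_bigr => i _.
rewrite (bigD1 (split_idx k).2) //= big1 ?addr0.
  by rewrite eqxx mulr1.
by move=> j /negbTE; rewrite eq_sym => ->; rewrite mulr0 mul0r.
Qed.
Lemma cauchy_schwarz (R : realType) (I : finType) (u v : I -> R) :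
  (\sum_i u i * v i) ^+ 2 <= (\sum_i u i ^+ 2) * (\sum_i v i ^+ 2).
Proof.
have H0 : 0 <= \sum_i \sum_j (u i * v j - u j * v i) ^+ 2.
  by apply: sumr_ge0 => i _; apply: sumr_ge0 => j _; apply: sqr_ge0.
have E : \sum_i \sum_j (u i * v j - u j * v i) ^+ 2 =
   2 * ((\sum_i u i ^+ 2) * (\sum_i v i ^+ 2) - (\sum_i u i * v i) ^+ 2).
  have E1 : forall i j, (u i * v j - u j * v i) ^+ 2 =
     u i ^+ 2 * v j ^+ 2 + v i ^+ 2 * u j ^+ 2 - 2 * ((u i * v i) * (u j * v j)).
    by move=> i j; ring.
  under eq_bigr do under eq_bigr do rewrite E1.
  under eq_bigr do rewrite sumrB big_split /= -!mulr_sumr.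
  rewrite sumrB big_split /= -!mulr_suml -mulr_sumr -mulr_suml expr2.
  ring.
move: H0; rewrite E pmulr_rge0 // subr_ge0 //.
Qed.
Lemma sqrt_le (R : realType) (x b : R) : 0 <= b -> x <= b ^+ 2 -> Num.sqrt x <= b.
Proof.
move=> b0 hx; rewrite -(ger0_norm b0) -sqrtr_sqr ler_sqrt //; exact: sqr_ge0.
Qed.

Lemma vnorm_ge0 (R : realType) N (v : 'cV[R]_N) : 0 <= vnorm v.
Proof. exact: sqrtr_ge0. Qed.

Lemma vnorm_sq (R : realType) N (v : 'cV[R]_N) : vnorm v ^+ 2 = \sum_i v i 0 ^+ 2.
Proof. by rewrite sqr_sqrtr //; apply: sumr_ge0 => i _; apply: sqr_ge0. Qed.

Lemma vnormD (R : realType) N (a b : 'cV[R]_N) : vnorm (a + b) <= vnorm a + vnorm b.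
Proof.
apply: sqrt_le; first by rewrite addr_ge0 ?vnorm_ge0.
have CS := cauchy_schwarz (fun i => a i 0) (fun i => b i 0).
rewrite -!vnorm_sq in CS.
have ab : \sum_i a i 0 * b i 0 <= vnorm a * vnorm b.
  rewrite -[vnorm a * vnorm b]ger0_norm ?mulr_ge0 ?vnorm_ge0 //.
  apply: le_trans (ler_norm _) _.
  rewrite -ler_sqr ?nnegrE ?normr_ge0 // !real_normK ?num_real //.
  by rewrite exprMn.
have -> : \sum_i (a + b) i 0 ^+ 2 = vnorm a ^+ 2 + 2 * \sum_i a i 0 * b i 0 + vnorm b ^+ 2.
  rewrite !vnorm_sq mulr_sumr -!big_split /=; apply: eq_bigr => i _; rewrite mxE; ring.
have := vnorm_ge0 a; have := vnorm_ge0 b; nra.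
Qed.

Lemma vnormZ (R : realType) N (c : R) (v : 'cV[R]_N) : vnorm (c *: v) = `|c| * vnorm v.
Proof.
rewrite /vnorm -sqrtr_sqr -sqrtrM ?sqr_ge0 // mulr_sumr; congr Num.sqrt.
by apply: eq_bigr => i _; rewrite mxE exprMn.
Qed.

Lemma vnorm0 (R : realType) N : vnorm (0 : 'cV[R]_N) = 0.
Proof. by rewrite /vnorm big1 ?sqrtr0 // => i _; rewrite mxE expr0n. Qed.

Lemma vnorm_sum (R : realType) N (I : Type) (r : seq I) (P : pred I) (F : I -> 'cV[R]_N) :
  vnorm (\sum_(i <- r | P i) F i) <= \sum_(i <- r | P i) vnorm (F i).
Proof.
apply: (big_rec2 (fun a b => vnorm a <= b)); first by rewrite vnorm0.
by move=> i y1 y2 _ h; apply: le_trans (vnormD _ _) _; rewrite lerD2l.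
Qed.
Lemma mv_bound (R : realType) N (M : 'M[R]_N) (v : 'cV[R]_N) :
  vnorm v <= 1 -> vnorm (M *m v) <= Num.sqrt (\sum_i \sum_j M i j ^+ 2).
Proof.
move=> hv; apply: ler_wsqrtr; apply: ler_sum => i _.
have hs : \sum_j v j 0 ^+ 2 <= 1.
  by rewrite -vnorm_sq expr_le1 ?vnorm_ge0.
rewrite mxE; apply: le_trans (cauchy_schwarz (fun j => M i j) (fun j => v j 0)) _.
rewrite -[X in _ <= X]mulr1 ler_wpM2l //.
by apply: sumr_ge0 => j _; apply: sqr_ge0.
Qed.

Lemma opnormP (R : realType) N (M : 'M[R]_N) (v : 'cV[R]_N) :
  vnorm (M *m v) <= opnorm M * vnorm v.
Proof.
have ub : forall w, vnorm w <= 1 -> vnorm (M *m w) <= opnorm M.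
  move=> w hw; apply: ub_le_sup; last by exists w.
  exists (Num.sqrt (\sum_i \sum_j M i j ^+ 2)) => y [u hu <-]; exact: mv_bound.
have [v0|vp] := eqVneq (vnorm v) 0.
  have hv : v = 0.
    apply/colP => i; rewrite mxE.
    have := vnorm_sq v; rewrite [vnorm _]v0 expr0n /= => /esym/eqP.
    rewrite psumr_eq0 => [/allP/(_ i (mem_index_enum _))|j _]; last exact: sqr_ge0.
    by rewrite /= sqrf_eq0 => /eqP.
  by rewrite hv mulmx0 vnorm0 mulr0.
have vpos : 0 < vnorm v by rewrite lt_def vp vnorm_ge0.
have := ub ((vnorm v)^-1 *: v).
rewrite vnormZ ger0_norm ?invr_ge0 ?vnorm_ge0 // mulVf // lexx => /(_ isT).
by rewrite -scalemxAr vnormZ ger0_norm ?invr_ge0 ?vnorm_ge0 // mulrC ler_pdivrMr.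
Qed.
Lemma stackD (R : realType) m n (X Z : 'M[R]_(m, n)) : stack (X + Z) = stack X + stack Z.
Proof. by apply/colP => k; rewrite !mxE. Qed.

Lemma hatW_pow (R : realType) m n (W : 'M[R]_m) (X : 'M[R]_(m, n)) p :
  hatW n W ^+ p *m stack X = stack (W ^+ p *m X).
Proof.
elim: p => [|p IH]; first by rewrite !expr0 -!idmxE !mul1mx.
by rewrite !exprS -!mulmxE -!mulmxA IH /hatW kron_stack.
Qed.

Lemma vnorm_stack (R : realType) m n (X : 'M[R]_(m, n)) :
  vnorm (stack X) = Num.sqrt (\sum_i \sum_j X i j ^+ 2).
Proof.
rewrite /vnorm; congr Num.sqrt.
under eq_bigr do rewrite mxE.
exact: (@sum_split R m n (fun i j => X i j ^+ 2)).
Qed.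
End Helpers.
Theorem proposition2 (R : realType) (m n : nat) (e : rel 'I_m)
  (W : 'M[R]_m) (lam : seq R)
  (f : 'I_m -> 'rV[R]_n -> R) (rho : R -> R)
  (D : nat -> 'I_m -> 'rV[R]_n -> Prop) (alpha : nat -> 'I_m -> R)
  (amax : nat -> R) (x : nat -> 'I_m -> 'rV[R]_n) (CW Czeta : R) :
  (1 < m)%N ->
  graph_ok e ->
  mixing e W lam ->
  (forall a, 0 < a -> 0 < rho a) ->
  (forall k i d, D k i d -> rnorm d = 1) ->
  (forall k i, 0 < alpha k i) ->
  (forall k, 0 < amax k) ->
  (forall k i, alpha k i <= amax k) ->
  (forall i j, x 0%N i = x 0%N j) ->
  (forall k i, ddsf_step e W f rho D alpha x k i) ->
  let zeta : R := Num.max `|lam`_1| `|lam`_(m.-1)| in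
  0 <= CW ->
  (forall j : nat, opnorm (hatW n W ^+ j - @Am R m n) <= CW * zeta ^+ j) ->
  0 <= Czeta ->
  (forall k : nat, \sum_(0 <= j < k.+1) zeta ^+ (k - j) * amax j <= Czeta * amax k) ->
  forall k : nat, (1 <= k)%N ->
    vnorm (xstack x k - @Am R m n *m xstack x k)
      <= Num.sqrt (m%:R) * CW *
           (vnorm (xstack x 0%N) * zeta ^+ k + Czeta * amax k.-1).
Proof.
move=> hm _ [hWT [hW0 [hWpos [_ [_ [_ [hW1 _]]]]]]] _ hD hapos hamax hal _ hstep.
move=> zeta hCW hop hCz hsum k hk.
pose Y := fun k => (\matrix_(i, j) x k i 0 j : 'M[R]_(m, n)).
have xsE : forall k, xstack x k = stack (Y k) by [].
pose G := fun k => Y k.+1 - W *m Y k.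
pose H := hatW n W.
pose A := @Am R m n.
have recY : forall k, stack (Y k.+1) = H *m stack (Y k) + stack (G k).
  by move=> j; rewrite /H /hatW kron_stack -stackD /G addrC subrK.
have zeta0 : 0 <= zeta by rewrite /zeta le_max normr_ge0.
pose J := (m%:R)^-1 *: (const_mx 1 : 'M[R]_m).
have AJ : forall X, A *m stack X = stack (J *m X).
  by move=> X; rewrite /A /Am kron_stack.
have JW : J *m W = J.
  apply/matrixP => i j; rewrite !mxE.
  under eq_bigr do rewrite !mxE mulr1.
  rewrite -mulr_sumr.
  have -> : \sum_l W l j = 1.
    have := congr1 (fun M : 'cV[R]_m => M j 0) hW1; rewrite !mxE => <-.
    apply: eq_bigr => l _; rewrite mxE mulr1.
    by have := congr1 (fun M : 'M[R]_m => M l j) hWT; rewrite mxE.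
  by [].
have JWp : forall p, J *m W ^+ p = J.
  elim=> [|p IH]; first by rewrite expr0 -idmxE mulmx1.
  by rewrite exprSr -mulmxE mulmxA IH JW.
have AHp : forall p X, A *m (H ^+ p *m stack X) = A *m stack X.
  by move=> p X; rewrite /H hatW_pow !AJ mulmxA JWp.
have HS : forall p (v : 'cV[R]_(m * n)), H *m (H ^+ p *m v) = H ^+ p.+1 *m v.
  by move=> p v; rewrite exprS -mulmxE mulmxA.
have vform : forall K, stack (Y K.+1) = H ^+ K.+1 *m stack (Y 0%N)
     + \sum_(0 <= j < K.+1) H ^+ (K - j) *m stack (G j).
  elim=> [|K IH].
    by rewrite recY big_nat1 expr1 subnn expr0 -idmxE mul1mx.
  rewrite recY IH mulmxDr mulmx_sumr HS.
  rewrite [X in _ = _ + X]big_nat_recr //= subnn expr0 -idmxE mul1mx addrA.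
  congr (_ + _ + _).
  by apply: eq_big_nat => j /andP [_ hj]; rewrite HS subSn.
have gb : forall j, vnorm (stack (G j)) <= Num.sqrt m%:R * amax j.
  move=> j; rewrite vnorm_stack; apply: sqrt_le.
    by rewrite mulr_ge0 ?sqrtr_ge0 // ltW.
  rewrite exprMn sqr_sqrtr ?ler0n //.
  have <- : \sum_(i < m) amax j ^+ 2 = m%:R * amax j ^+ 2.
    by rewrite sumr_const card_ord mulr_natl.
  apply: ler_sum => i _.
  have mixE : \sum_(l | (l == i) || e i l) W i l *: x j l = \sum_l W i l *: x j l.
    rewrite big_mkcond; apply: eq_bigr => l _; case: ifP => // hP.
    have -> : W i l = 0; last by rewrite scale0r.
    apply/eqP; rewrite eq_le hW0 andbT leNgt; apply/negP.
    move/(proj1 (hWpos i l)) => [hil|hil].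
      by move: hP; rewrite hil eqxx.
    by move: hP; rewrite hil orbT.
  have GE : forall jj, G j i jj = (x j.+1 i - \sum_l W i l *: x j l) 0 jj.
    move=> jj; rewrite /G !mxE summxE; congr (_ - _).
    by apply: eq_bigr => l _; rewrite !mxE.
  under eq_bigr do rewrite GE.
  case: (hstep j i) => [[d [hd [_ ->]]] | [_ ->]]; rewrite mixE.
    rewrite addrC addKr.
    under eq_bigr do rewrite mxE exprMn.
    rewrite -mulr_sumr.
    have : \sum_jj d 0 jj ^+ 2 = 1.
      have := hD _ _ _ hd; rewrite /rnorm => h.
      by rewrite -(@sqr_sqrtr _ (\sum_jj d 0 jj ^+ 2)) ?h ?expr1n //; apply: sumr_ge0 => jj _; apply: sqr_ge0.
    move=> ->; rewrite mulr1.
    have := hal j i; have := hapos j i; nra.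
  rewrite subrr big1; first by apply: sqr_ge0.
  by move=> jj _; rewrite mxE expr0n.
case: k hk => [//|K] _ /=.
rewrite !xsE.
have dev : stack (Y K.+1) - A *m stack (Y K.+1) = (H ^+ K.+1 - A) *m stack (Y 0%N)
    + \sum_(0 <= j < K.+1) (H ^+ (K - j) - A) *m stack (G j).
  rewrite {2}vform mulmxDr mulmx_sumr AHp.
  under eq_bigr do rewrite AHp.
  rewrite {1}vform mulmxBl.
  under [X in _ = _ + X]eq_bigr do rewrite mulmxBl.
  by rewrite sumrB opprD addrACA.
rewrite -/A dev.
apply: le_trans (vnormD _ _) _.
have b1 : vnorm ((H ^+ K.+1 - A) *m stack (Y 0%N)) <= CW * zeta ^+ K.+1 * vnorm (stack (Y 0%N)).
  apply: le_trans (opnormP _ _) _; apply: ler_wpM2r; [exact: vnorm_ge0 | exact: hop].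
have b2 : vnorm (\sum_(0 <= j < K.+1) (H ^+ (K - j) - A) *m stack (G j))
    <= CW * Num.sqrt m%:R * (Czeta * amax K).
  apply: le_trans (vnorm_sum _ _ _) _.
  apply: (@le_trans _ _ (\sum_(0 <= j < K.+1) CW * Num.sqrt m%:R * (zeta ^+ (K - j) * amax j))).
    apply: ler_sum => j _; apply: le_trans (opnormP _ _) _.
    apply: le_trans (ler_wpM2r (vnorm_ge0 _) (hop (K - j)%N)) _.
    apply: le_trans (ler_wpM2l _ (gb j)) _.
      by rewrite mulr_ge0 ?exprn_ge0.
    by rewrite mulrA [CW * _ * _]mulrAC -!mulrA.
  by rewrite -mulr_sumr; apply: ler_wpM2l (hsum K); rewrite mulr_ge0 ?sqrtr_ge0.
apply: le_trans (lerD b1 b2) _.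
have s1 : 1 <= Num.sqrt (m%:R : R).
  rewrite -[X in X <= _]sqrtr1; apply: ler_wsqrtr; rewrite ler1n; exact: ltnW.
have p0 : 0 <= CW * zeta ^+ K.+1 * vnorm (stack (Y 0%N)).
  by rewrite !mulr_ge0 ?exprn_ge0 ?vnorm_ge0.
have s1p : 0 <= Num.sqrt (m%:R : R) - 1 by rewrite subr_ge0.
have := mulr_ge0 s1p p0.
nra.
Qed.
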